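(* For every positive integer $n$, $$\sum_{k=1}^{n}N^p_{bin}(k)\,s(n-k)=\vartheta_2(n)+1,$$ where $s(0)=1$ and $s(m)=(-1)^{h(m)}$ for $m\ge1$.
   Context: A binary partition of $m$ is a partition of $m$ all of whose parts are powers of $2$ (including $2^0=1$). $N^p_{bin}(m)$ is the total number of parts, summed over all binary partitions of $m$. $h(m)$ is the number of ones in the binary representation of $m$. $\vartheta_2(n)$ is the $2$-adic valuation of $n$. *)

(* Defs.v *)
From mathcomp Require Import all_boot all_order all_algebra.
Set Implicit Arguments. Unset Strict Implicit. Unset Printing Implicit Defensive.
Import Order.TTheory GRing.Theory Num.Theory.

(* A binary partition of m is represented by its multiplicity function
   c : exponent i |-> number of parts equal to 2^i.  Every part 2^i of a
   partition of m satisfies i <= m and every multiplicity is <= m, so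
   c : {ffun 'I_m.+1 -> 'I_m.+1} with \sum_i c i * 2^i = m enumerates the
   binary partitions of m bijectively. *)
Definition is_bin_partition (m : nat) (c : {ffun 'I_m.+1 -> 'I_m.+1}) : bool :=
  (\sum_(i < m.+1) (c i : nat) * 2 ^ i)%N == m.

Definition num_parts (m : nat) (c : {ffun 'I_m.+1 -> 'I_m.+1}) : nat :=
  (\sum_(i < m.+1) (c i : nat))%N.

Definition Npbin (m : nat) : nat :=
  (\sum_(c : {ffun 'I_m.+1 -> 'I_m.+1} | is_bin_partition c) num_parts c)%N.

(* h(m): number of ones in the binary representation of m
   (bit i of m is odd (m %/ 2^i); bits with i > m vanish since m < 2^m) *)
Definition hbin (m : nat) : nat := (\sum_(i < m.+1) odd (m %/ 2 ^ i))%N.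

Definition sfun (m : nat) : int := if m == 0%N then 1%R else ((-1) ^+ hbin m)%R.

(* Main.v *)
Require Import Defs.
From mathcomp Require Import all_boot all_order all_algebra.
From mathcomp Require Import zify ring.
Import GRing.Theory Num.Theory.
Local Open Scope ring_scope.



Lemma hbin_ext K d m : (m < 2 ^ K)%N ->
  (\sum_(i < K + d) odd (m %/ 2 ^ i) = \sum_(i < K) odd (m %/ 2 ^ i))%N.
Proof.
move=> hm; elim: d => [|d IH]; first by rewrite addn0.
rewrite addnS big_ord_recr /= IH divn_small ?addn0 //.
apply: leq_trans hm _; rewrite leq_exp2l //; lia.
Qed.

Lemma hbinE K m : (m < 2 ^ K)%N -> hbin m = (\sum_(i < K) odd (m %/ 2 ^ i))%N.
Proof.
move=> hm; rewrite /hbin.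
have hm1 : (m < 2 ^ m.+1)%N.
  apply: ltn_trans (ltn_expl _ (isT : (1 < 2)%N)) _; rewrite ltn_exp2l //.
rewrite -(@hbin_ext _ (maxn K m.+1 - m.+1) _ hm1).
have -> : (m.+1 + (maxn K m.+1 - m.+1) = K + (maxn K m.+1 - K))%N.
  by rewrite !subnKC ?leq_maxl ?leq_maxr.
by rewrite hbin_ext.
Qed.

Lemma hbin0 : hbin 0 = 0%N.
Proof. by rewrite /hbin big_ord1. Qed.

Lemma hbin_add L m : (m < 2 ^ L)%N -> hbin (m + 2 ^ L) = (hbin m).+1.
Proof.
move=> hm.
rewrite (@hbinE L.+1); last by rewrite expnS mul2n -addnn ltn_add2r.
rewrite (@hbinE L m hm) big_ord_recr /=.
have -> : ((m + 2 ^ L) %/ 2 ^ L = 1)%N.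
  rewrite divnDr ?dvdnn // divnn expn_gt0 divn_small //.
have -> : odd 1 = true by [].
rewrite addn1; congr (_.+1).
apply: eq_bigr => i _.
have hi : (i < L)%N := ltn_ord i.
rewrite divnDr; last by rewrite dvdn_exp2l // ltnW.
rewrite -(expnB (isT : (0 < 2)%N) (ltnW hi)) oddD oddX.
have -> : ((L - i)%N == 0%N) = false by rewrite subn_eq0 leqNgt hi.
by rewrite /= addbF.
Qed.

Definition Y (i : nat) : {poly int} := 'X^(2 ^ i).
Definition S (L : nat) : {poly int} := \prod_(i < L) (1 - Y i).

Lemma S_coef L m : (S L)`_m = if (m < 2 ^ L)%N then (-1) ^+ hbin m else 0.
Proof.
elim: L m => [|L IH] m.
  rewrite /S big_ord0 coefC expn0. case: m => [|m]. by rewrite hbin0. done.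
rewrite /S big_ord_recr /= -/(S L) mulrBr mulr1 coefB /Y coefMXn !IH.
case: (ltnP m (2 ^ L)) => h1.
  by rewrite subr0 (leq_trans h1) // leq_exp2l.
rewrite sub0r.
case: (ltnP m (2 ^ L.+1)) => h2.
  have h3 : (m - 2 ^ L < 2 ^ L)%N.
    rewrite expnS in h2. lia.
  rewrite h3.
  have -> : m = ((m - 2 ^ L) + 2 ^ L)%N by lia.
  by rewrite hbin_add // addnK exprS mulN1r.
have h3 : (2 ^ L <= m - 2 ^ L)%N.
  rewrite expnS in h2. lia.
by rewrite ltnNge h3 oppr0.
Qed.



Definition eqt (K : nat) (p q : {poly int}) := forall k, (k < K)%N -> p`_k = q`_k.

Lemma eqt_refl K p : eqt K p p. Proof. by []. Qed.
Lemma eqt_sym K p q : eqt K p q -> eqt K q p. Proof. by move=> h k hk; rewrite h. Qed.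
Lemma eqt_trans K p q r : eqt K p q -> eqt K q r -> eqt K p r.
Proof. by move=> h1 h2 k hk; rewrite h1 // h2. Qed.
Lemma eqt_le K K' p q : (K' <= K)%N -> eqt K p q -> eqt K' p q.
Proof. by move=> hK h k hk; apply: h; apply: leq_trans hK. Qed.
Lemma eqt_add K p q p' q' : eqt K p p' -> eqt K q q' -> eqt K (p + q) (p' + q').
Proof. by move=> h1 h2 k hk; rewrite !coefD h1 // h2. Qed.
Lemma eqt_mul K p q p' q' : eqt K p p' -> eqt K q q' -> eqt K (p * q) (p' * q').
Proof.
move=> h1 h2 k hk; rewrite !coefM; apply: eq_bigr => j _.
have hj : (j <= k)%N by rewrite -ltnS.
by rewrite h1 ?h2 //; apply: leq_ltn_trans hk; rewrite ?leq_subr.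
Qed.

Lemma eqt_sum K (I : finType) (P : pred I) (F G : I -> {poly int}) :
  (forall i, P i -> eqt K (F i) (G i)) -> eqt K (\sum_(i | P i) F i) (\sum_(i | P i) G i).
Proof. move=> h; apply: (big_ind2 (eqt K)) => // ? ? ? ?; exact: eqt_add. Qed.

Lemma eqt_prod K (I : finType) (P : pred I) (F G : I -> {poly int}) :
  (forall i, P i -> eqt K (F i) (G i)) -> eqt K (\prod_(i | P i) F i) (\prod_(i | P i) G i).
Proof. move=> h; apply: (big_ind2 (eqt K)) => // ? ? ? ?; exact: eqt_mul. Qed.

Lemma eqt_cancel K (Q Q' S S' : {poly int}) : S`_0 = 1 -> eqt K S S' -> eqt K (Q * S) (Q' * S') -> eqt K Q Q'.
Proof.
move=> h0; elim: K => [|K IH] hS hQS; first by move=> k.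
have IH' : eqt K Q Q'.
  by apply: IH; apply: eqt_le (leqnSn K) _.
move=> k; rewrite ltnS leq_eqVlt => /orP [/eqP ->|hk]; last exact: IH'.
have := hQS K (ltnSn K); rewrite !coefM !big_ord_recr /= subnn.
have -> : S'`_0 = 1 by rewrite -hS.
rewrite h0 !mulr1.
have -> : \sum_(i < K) Q`_i * S`_(K - i) = \sum_(i < K) Q'`_i * S'`_(K - i).
  apply: eq_bigr => i _; rewrite IH' // hS //; apply: leq_ltn_trans (leq_subr _ _) _; exact: ltnSn.
by move/addrI.
Qed.

Lemma EY B (y : {poly int}) : (\sum_(j < B) y ^+ j) * (1 - y) = 1 - y ^+ B.
Proof.
have := subrX1 y B. move=> h.
rewrite mulrC -opprB mulNr -h opprB //.
Qed.

Lemma DY B (y : {poly int}) :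
  (\sum_(j < B) (j%:R * y ^+ j)) * (1 - y) = \sum_(j < B) y ^+ j.+1 - B%:R * y ^+ B.
Proof.
elim: B => [|B IH]; first by rewrite !big_ord0 mul0r mul0r subr0.
rewrite !big_ord_recr /= mulrDl IH -natr1.
set s := \sum_(i < B) _.
rewrite !exprS.
ring.
Qed.



Definition E B i := \sum_(j < B) Y i ^+ j.
Definition D B i := \sum_(j < B) ((j : nat)%:R * Y i ^+ j).
Definition Q L B := \sum_(i0 < L) (D B i0 * \prod_(i < L | i != i0) E B i).
Definition R L B := \sum_(i0 < L) \sum_(j < B) Y i0 ^+ j.+1.

Lemma YB0 i B k : (k < B)%N -> (Y i ^+ B)`_k = 0.
Proof.
move=> hk; rewrite /Y -exprM coefXn.
have -> : (k == 2 ^ i * B)%N = false.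
  apply/negbTE; rewrite neq_ltn; apply/orP; left.
  by apply: leq_trans hk _; apply: leq_pmull; rewrite expn_gt0.
by [].
Qed.

Lemma QS L B : eqt B (Q L B * S L) (R L B).
Proof.
rewrite /Q /S /R mulr_suml; apply: eqt_sum => i0 _.
rewrite [\prod_(i < L) (1 - Y i)](bigD1 i0) //= mulrACA -big_split /= /D DY.
rewrite -[X in eqt _ _ X]mulr1; apply: eqt_mul.
  by move=> k hk; rewrite coefB mulr_natl coefMn YB0 // mul0rn subr0.
apply: (@eqt_trans _ _ (\prod_(i < L | i != i0) (1:{poly int}))); last by rewrite big1.
apply: eqt_prod => i _; rewrite /E EY.
by move=> k hk; rewrite coefB YB0 // subr0.
Qed.

Lemma sum_eq_nat B x : (\sum_(j < B) ((j : nat) == x) = (x < B))%N.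
Proof.
elim: B => [|B IH]; first by rewrite big_ord0.
rewrite big_ord_recr /= IH.
case: (ltngtP x B) => h.
- by rewrite (ltn_trans h (ltnSn B)).
- by rewrite ltnNge h.
- by rewrite h ltnSn.
Qed.

Lemma sum_le_nat L v : (\sum_(i < L) ((i : nat) <= v) = minn L v.+1)%N.
Proof.
elim: L => [|L IH]; first by rewrite big_ord0.
rewrite big_ord_recr /= IH.
case: (leqP L v) => h.
- rewrite !minnE; lia.
- rewrite !minnE; lia.
Qed.

Lemma L1 a k B : (0 < a)%N -> (0 < k)%N -> (k < B)%N ->
  (\sum_(j < B) (k == a * j.+1) = (a %| k)%N)%N.
Proof.
move=> ha hk hkB.
case: (boolP (a %| k)%N) => hd.
  have [q hq] : exists q, k = (a * q)%N by exists (k %/ a)%N; rewrite mulnC divnK.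
  have hq0 : (0 < q)%N by move: hk; rewrite hq muln_gt0 => /andP [].
  have hqk : (q <= k)%N by rewrite hq leq_pmull.
  have hB : (q.-1 < B)%N by apply: leq_ltn_trans hkB; apply: leq_trans hqk; exact: leq_pred.
  transitivity (\sum_(j < B) ((j:nat) == q.-1))%N; last by rewrite sum_eq_nat hB.
  apply: eq_bigr => j _; rewrite hq eqn_pmul2l //.
  by case: q hq hq0 {hqk hB} => // q _ _ /=; rewrite eqSS eq_sym.
apply: big1 => j _.
apply/eqP; rewrite eqb0; apply/eqP => h.
by move: hd; rewrite h dvdn_mulr.
Qed.

Lemma R_coef L B k : (0 < k)%N -> (k < L)%N -> (k < B)%N ->
  (R L B)`_k = (logn 2 k).+1%:R.
Proof.
move=> hk hkL hkB.
rewrite /R coef_sum.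
have -> : \sum_(i < L) (\sum_(j < B) Y i ^+ j.+1)`_k = (\sum_(i < L) ((i : nat) <= logn 2 k))%N%:R.
  rewrite natr_sum; apply: eq_bigr => i _.
  rewrite coef_sum -(@pfactor_dvdn 2 i k isT hk) -(@L1 (2 ^ i) k B) ?expn_gt0 //.
  rewrite natr_sum; apply: eq_bigr => j _.
  by rewrite /Y -exprM coefXn.
rewrite sum_le_nat; congr (_%:R).
apply/minn_idPr.
have h1 : (2 ^ logn 2 k <= k)%N.
  by apply: dvdn_leq => //; rewrite pfactor_dvdn.
have h2 : (logn 2 k < 2 ^ logn 2 k)%N by apply: ltn_expl.
apply: leq_ltn_trans hkL; apply: leq_trans h1; exact: ltnW h2.
Qed.

Lemma R_coef0 L B : (R L B)`_0 = 0.
Proof.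
rewrite /R coef_sum big1 // => i _; rewrite coef_sum big1 // => j _.
rewrite /Y -exprM coefXn.
have -> : (0 == 2 ^ i * j.+1)%N = false.
  by apply/negbTE; rewrite eq_sym -lt0n muln_gt0 expn_gt0.
by [].
Qed.



Definition G L B (i0 i : 'I_L) (j : 'I_B) : {poly int} :=
  if i == i0 then (j : nat)%:R * Y i ^+ j else Y i ^+ j.
Arguments G {L B}.

Lemma QG L B (i0 : 'I_L) :
  D B i0 * \prod_(i < L | i != i0) E B i = \prod_(i < L) \sum_(j < B) G i0 i j.
Proof.
rewrite [RHS](bigD1 i0) //=; congr (_ * _).
  by rewrite /D; apply: eq_bigr => j _; rewrite /G eqxx.
apply: eq_bigr => i hi; rewrite /E; apply: eq_bigr => j _.
by rewrite /G (negbTE hi).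
Qed.

Lemma prodG L B (i0 : 'I_L) (c : {ffun 'I_L -> 'I_B}) :
  \prod_(i < L) G i0 i (c i) =
  (c i0 : nat)%:R * 'X^(\sum_(i < L) (c i : nat) * 2 ^ i)%N.
Proof.
rewrite (bigD1 i0) //= {1}/G eqxx -mulrA; congr (_ * _).
have -> : 'X^(\sum_(i < L) (c i : nat) * 2 ^ i)%N = \prod_(i < L) Y i ^+ c i.
  rewrite -prodrXr; apply: eq_bigr => i _; by rewrite /Y -exprM mulnC.
rewrite [RHS](bigD1 i0) //=; congr (_ * _).
by apply: eq_bigr => i hi; rewrite /G (negbTE hi).
Qed.

Lemma Q_coef L B k : (Q L B)`_k =
  (\sum_(c : {ffun 'I_L -> 'I_B} | (\sum_(i < L) (c i : nat) * 2 ^ i)%N == k)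
     (\sum_(i < L) (c i : nat))%N)%:R.
Proof.
rewrite /Q (eq_bigr _ (fun i0 _ => QG L B i0)).
rewrite (eq_bigr _ (fun i0 _ => bigA_distr_bigA _)) /= exchange_big /=.
rewrite coef_sum natr_sum [RHS]big_mkcond /=.
apply: eq_bigr => c _.
rewrite (eq_bigr _ (fun i0 _ => @prodG L B i0 c)) -mulr_suml -natr_sum mulr_natl coefMn coefXn eq_sym.
by case: eqP => _; rewrite ?mul0rn ?mulr1n.
Qed.



Lemma sfunE m : sfun m = (-1) ^+ hbin m.
Proof. by rewrite /sfun; case: eqP => // ->; rewrite hbin0. Qed.

Lemma Npbin0 : Npbin 0 = 0%N.
Proof.
rewrite /Npbin big1 // => c _; rewrite /num_parts big_ord1.
by case: (c ord0) => [[|]].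
Qed.

Lemma lt_pow2 m : (m < 2 ^ m)%N.
Proof. exact: ltn_expl. Qed.

Lemma key n k : (k <= n)%N -> (Npbin k)%:Z = (Q n.+1 n.+1)`_k.
Proof.
move=> hk.
have -> : (Npbin k)%:Z = (Q k.+1 k.+1)`_k by rewrite Q_coef natz.
apply: (@eqt_cancel k.+1 (Q k.+1 k.+1) (Q n.+1 n.+1) (S k.+1) (S n.+1)) => //.
- by rewrite S_coef expn_gt0 hbin0.
- move=> m hm; rewrite !S_coef.
  have h1 : (m < 2 ^ k.+1)%N by apply: ltn_trans hm (lt_pow2 _).
  have h2 : (m < 2 ^ n.+1)%N by apply: leq_trans h1 _; rewrite leq_exp2l.
  by rewrite h1 h2.
- apply: eqt_trans (QS _ _) _.
  apply: (@eqt_trans _ _ (R n.+1 n.+1)).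
    move=> m hm; case: m hm => [|m] hm; first by rewrite !R_coef0.
    rewrite !R_coef //; apply: leq_trans hm _; by rewrite ltnS.
  apply: eqt_sym; apply: (@eqt_le n.+1); first by rewrite ltnS.
  exact: QS.
Qed.

Theorem corollary8 (n : nat) (hn : (0 < n)%N) :
  \sum_(1 <= k < n.+1) (Npbin k)%:Z * sfun (n - k) = (logn 2 n)%:Z + 1.
Proof.
have -> : (logn 2 n)%:Z + 1 = (R n.+1 n.+1)`_n.
  by rewrite R_coef // -natr1 natz.
rewrite -(@QS n.+1 n.+1 n (ltnSn n)) coefM -(big_mkord xpredT (fun j => (Q n.+1 n.+1)`_j * (S n.+1)`_(n - j))).
rewrite big_ltn // -(@key n 0) // Npbin0 mul0r add0r.
apply: eq_big_nat => k /andP [h1 h2].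
have hk : (k <= n)%N by rewrite -ltnS.
rewrite (@key n k hk) sfunE S_coef.
have hh : (n - k < 2 ^ n.+1)%N :=
  leq_ltn_trans (leq_subr k n) (ltn_trans (ltnSn n) (lt_pow2 n.+1)).
by rewrite hh.
Qed.
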